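(* $\mathfrak{F}\models_{\mathbf{K}\mathsf{G}^2}\phi$ iff for any model $\mathfrak{M}$ on $\mathfrak{F}$ and any $w\in\mathfrak{F}$, $v_1(\phi,w)=1$.
   Context: The language $\mathsf{bi}\mathcal{L}^\neg_{\Box,\lozenge}$ is given by $\phi ::= p\mid\neg\phi\mid\phi\wedge\phi\mid\phi\vee\phi\mid\phi\rightarrow\phi\mid\phi\ominus\phi\mid\Box\phi\mid\lozenge\phi$, where $\ominus$ denotes the Gödel coimplication. On $[0,1]$: $a\wedge_\mathsf{G}b=\min(a,b)$, $a\vee_\mathsf{G}b=\max(a,b)$, $a\rightarrow_\mathsf{G}b=1$ if $a\le b$ and $b$ otherwise, $b\ominus_\mathsf{G}a=0$ if $b\le a$ and $b$ otherwise. A $\mathbf{K}\mathsf{G}^2$ model is $\mathfrak{M}=\langle W,R,v_1,v_2\rangle$ with $\langle W,R\rangle$ a crisp frame ($R\subseteq W\times W$) and $v_1,v_2:\mathsf{Var}\times W\to[0,1]$, extended by: $v_1(\neg\phi)=v_2(\phi)$, $v_2(\neg\phi)=v_1(\phi)$; $v_1(\phi\wedge\psi)=v_1(\phi)\wedge_\mathsf{G}v_1(\psi)$, $v_2(\phi\wedge\psi)=v_2(\phi)\vee_\mathsf{G}v_2(\psi)$; $v_1(\phi\vee\psi)=v_1(\phi)\vee_\mathsf{G}v_1(\psi)$, $v_2(\phi\vee\psi)=v_2(\phi)\wedge_\mathsf{G}v_2(\psi)$; $v_1(\phi\rightarrow\psi)=v_1(\phi)\rightarrow_\mathsf{G}v_1(\psi)$,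 $v_2(\phi\rightarrow\psi)=v_2(\psi)\ominus_\mathsf{G}v_2(\phi)$; $v_1(\phi\ominus\psi)=v_1(\phi)\ominus_\mathsf{G}v_1(\psi)$, $v_2(\phi\ominus\psi)=v_2(\psi)\rightarrow_\mathsf{G}v_2(\phi)$ (all at the same state $w$); $v_1(\Box\phi,w)=\inf\{v_1(\phi,w'):wRw'\}$, $v_2(\Box\phi,w)=\sup\{v_2(\phi,w'):wRw'\}$, $v_1(\lozenge\phi,w)=\sup\{v_1(\phi,w'):wRw'\}$, $v_2(\lozenge\phi,w)=\inf\{v_2(\phi,w'):wRw'\}$, with $\inf\varnothing=1$, $\sup\varnothing=0$. $\phi$ is $\mathbf{K}\mathsf{G}^2$ valid on a crisp frame $\mathfrak{F}$ ($\mathfrak{F}\models_{\mathbf{K}\mathsf{G}^2}\phi$) iff $v_1(\phi,w)=1$ and $v_2(\phi,w)=0$ for every $w\in\mathfrak{F}$ and every model on $\mathfrak{F}$. *)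

(* Defs.v *)
From HB Require Import structures.
From mathcomp Require Import all_boot all_order all_algebra.
From mathcomp Require Import boolp classical_sets reals Rstruct.
Set Implicit Arguments. Unset Strict Implicit. Unset Printing Implicit Defensive.
Import Order.TTheory GRing.Theory Num.Theory.
Local Open Scope ring_scope.
Local Open Scope classical_set_scope.

Notation RR := Rdefinitions.R.

Inductive fml : Type :=
| Var   : nat -> fml
| Neg   : fml -> fml
| And   : fml -> fml -> fml
| Or    : fml -> fml -> fml
| Imp   : fml -> fml -> fml
| Coimp : fml -> fml -> fml
| Box   : fml -> fml
| Dia   : fml -> fml.

Definition gmin (a b : RR) : RR := Num.min a b.
Definition gmax (a b : RR) : RR := Num.max a b.
Definition gimp (a b : RR) : RR := if a <= b then 1 else b.
Definition gcoimp (b a : RR) : RR := if b <= a then 0 else b.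

Definition Sup (E : set RR) : RR := if E == set0 then 0 else sup E.
Definition Inf (E : set RR) : RR := if E == set0 then 1 else inf E.

Record frame := Frame { fW : Type ; fR : fW -> fW -> Prop }.

Record model (F : frame) := Model {
  v1v : nat -> fW F -> RR ;
  v2v : nat -> fW F -> RR ;
  v1v_range : forall p w, 0 <= v1v p w <= 1 ;
  v2v_range : forall p w, 0 <= v2v p w <= 1 }.

Fixpoint ev (F : frame) (M : model F) (phi : fml) (w : fW F) : RR * RR :=
  match phi with
  | Var p => (v1v M p w, v2v M p w)
  | Neg a => ((ev M a w).2, (ev M a w).1)
  | And a b => (gmin (ev M a w).1 (ev M b w).1, gmax (ev M a w).2 (ev M b w).2)
  | Or a b => (gmax (ev M a w).1 (ev M b w).1, gmin (ev M a w).2 (ev M b w).2)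
  | Imp a b => (gimp (ev M a w).1 (ev M b w).1, gcoimp (ev M b w).2 (ev M a w).2)
  | Coimp a b => (gcoimp (ev M a w).1 (ev M b w).1, gimp (ev M b w).2 (ev M a w).2)
  | Box a => (Inf [set (ev M a w').1 | w' in [set w' | fR w w']],
              Sup [set (ev M a w').2 | w' in [set w' | fR w w']])
  | Dia a => (Sup [set (ev M a w').1 | w' in [set w' | fR w w']],
              Inf [set (ev M a w').2 | w' in [set w' | fR w w']])
  end.

Definition v1 (F : frame) (M : model F) phi w : RR := (ev M phi w).1.
Definition v2 (F : frame) (M : model F) phi w : RR := (ev M phi w).2.

Definition KG2_valid (F : frame) (phi : fml) : Prop :=
  forall (M : model F) (w : fW F), v1 M phi w = 1 /\ v2 M phi w = 0.

(* Main.v *)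
Require Import Defs.
From mathcomp Require Import all_boot all_order all_algebra.
From mathcomp Require Import boolp classical_sets reals Rstruct.
From mathcomp Require Import lra.
Import Order.TTheory GRing.Theory Num.Theory.
Local Open Scope ring_scope.
Local Open Scope classical_set_scope.

Section Aux.
Variables (T : Type) (A : set T) (f : T -> RR).
Hypothesis hf : forall w, A w -> 0 <= f w <= 1.

Lemma ne_cases : (A = set0 /\ [set f w | w in A] = set0 /\ [set 1 - f w | w in A] = set0)
  \/ (exists a, A a).
Proof.
case: (pselect (exists a, A a)) => [h|h]; [by right|left].
have A0 : A = set0.
  by apply/seteqP; split => // x Ax; exfalso; apply: h; exists x.
by rewrite A0 !image_set0.
Qed.

Lemma img_ub (g : T -> RR) : (forall w, A w -> g w <= 1) -> has_ubound [set g w | w in A].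
Proof. by move=> h; exists 1 => _ [w Aw <-]; apply: h. Qed.

Lemma img_lb (g : T -> RR) : (forall w, A w -> 0 <= g w) -> has_lbound [set g w | w in A].
Proof. by move=> h; exists 0 => _ [w Aw <-]; apply: h. Qed.

Lemma InfN : Inf [set 1 - f w | w in A] = 1 - Sup [set f w | w in A].
Proof.
rewrite /Inf /Sup.
case: ne_cases => [[_ [-> ->]]|[a Aa]]; first by rewrite eqxx subr0.
have n1 : [set 1 - f w | w in A] != set0.
  by apply/set0P; exists (1 - f a); exists a.
have n2 : [set f w | w in A] != set0.
  by apply/set0P; exists (f a); exists a.
rewrite (negbTE n1) (negbTE n2).
have ubS : has_ubound [set f w | w in A] by apply: img_ub => w /hf /andP[].
have lbT : has_lbound [set 1 - f w | w in A].
  by apply: img_lb => w /hf /andP[_ h]; rewrite subr_ge0.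
apply: le_anti; apply/andP; split.
- have : sup [set f w | w in A] <= 1 - inf [set 1 - f w | w in A].
    apply: ge_sup; first by exists (f a); exists a.
    move=> _ [w Aw <-].
    have : inf [set 1 - f w | w in A] <= 1 - f w.
      by apply: ge_inf => //; exists w.
    lra.
  lra.
- apply: lb_le_inf; first by exists (1 - f a); exists a.
  move=> _ [w Aw <-].
  have : f w <= sup [set f w | w in A] by apply: ub_le_sup => //; exists w.
  lra.
Qed.

Lemma SupN : Sup [set 1 - f w | w in A] = 1 - Inf [set f w | w in A].
Proof.
rewrite /Inf /Sup.
case: ne_cases => [[_ [-> ->]]|[a Aa]]; first by rewrite eqxx subrr.
have n1 : [set 1 - f w | w in A] != set0.
  by apply/set0P; exists (1 - f a); exists a.
have n2 : [set f w | w in A] != set0.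
  by apply/set0P; exists (f a); exists a.
rewrite (negbTE n1) (negbTE n2).
have lbS : has_lbound [set f w | w in A] by apply: img_lb => w /hf /andP[].
have ubT : has_ubound [set 1 - f w | w in A].
  by apply: img_ub => w /hf /andP[h _]; rewrite lerBlDr lerDl.
apply: le_anti; apply/andP; split.
- apply: ge_sup; first by exists (1 - f a); exists a.
  move=> _ [w Aw <-].
  have : inf [set f w | w in A] <= f w by apply: ge_inf => //; exists w.
  lra.
- have : 1 - sup [set 1 - f w | w in A] <= inf [set f w | w in A].
    apply: lb_le_inf; first by exists (f a); exists a.
    move=> _ [w Aw <-].
    have : 1 - f w <= sup [set 1 - f w | w in A] by apply: ub_le_sup => //; exists w.
    lra.
  lra.
Qed.

Lemma Sup_range : 0 <= Sup [set f w | w in A] <= 1.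
Proof.
rewrite /Sup; case: ne_cases => [[_ [-> _]]|[a Aa]]; first by rewrite eqxx lexx ler01.
have n2 : [set f w | w in A] != set0 by apply/set0P; exists (f a); exists a.
rewrite (negbTE n2).
have ubS : has_ubound [set f w | w in A] by apply: img_ub => w /hf /andP[].
apply/andP; split.
- have := @hf a Aa; move=> /andP[h _]; apply: (le_trans h).
  by apply: ub_le_sup => //; exists a.
- apply: ge_sup; first by exists (f a); exists a.
  by move=> _ [w Aw <-]; have /andP[] := @hf w Aw.
Qed.

Lemma Inf_range : 0 <= Inf [set f w | w in A] <= 1.
Proof.
rewrite /Inf; case: ne_cases => [[_ [-> _]]|[a Aa]]; first by rewrite eqxx ler01 lexx.
have n2 : [set f w | w in A] != set0 by apply/set0P; exists (f a); exists a.
rewrite (negbTE n2).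
have lbS : has_lbound [set f w | w in A] by apply: img_lb => w /hf /andP[].
apply/andP; split.
- apply: lb_le_inf; first by exists (f a); exists a.
  by move=> _ [w Aw <-]; have /andP[] := @hf w Aw.
- have := @hf a Aa; move=> /andP[_ h]; apply: le_trans h.
  by apply: ge_inf => //; exists a.
Qed.
End Aux.

Lemma ev_range (F : frame) (M : model F) phi w :
  (0 <= (ev M phi w).1 <= 1) /\ (0 <= (ev M phi w).2 <= 1).
Proof.
elim: phi w => [p|a IHa|a IHa b IHb|a IHa b IHb|a IHa b IHb|a IHa b IHb|a IHa|a IHa] w /=.
- by split; [apply: v1v_range | apply: v2v_range].
- by have [] := IHa w.
- have [/andP[? ?] /andP[? ?]] := IHa w; have [/andP[? ?] /andP[? ?]] := IHb w.
  rewrite /gmin /gmax; split; apply/andP; split;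
    rewrite ?le_min ?ge_min ?le_max ?ge_max; apply/orP || apply/andP; (try by left); by split.
- have [/andP[? ?] /andP[? ?]] := IHa w; have [/andP[? ?] /andP[? ?]] := IHb w.
  rewrite /gmin /gmax; split; apply/andP; split;
    rewrite ?le_min ?ge_min ?le_max ?ge_max; apply/orP || apply/andP; (try by left); by split.
- have [/andP[? ?] /andP[? ?]] := IHa w; have [/andP[? ?] /andP[? ?]] := IHb w.
  rewrite /gimp /gcoimp; split; case: ifP => _; rewrite ?lexx ?ler01 //; by apply/andP.
- have [/andP[? ?] /andP[? ?]] := IHa w; have [/andP[? ?] /andP[? ?]] := IHb w.
  rewrite /gimp /gcoimp; split; case: ifP => _; rewrite ?lexx ?ler01 //; by apply/andP.
- split; [apply: Inf_range | apply: Sup_range]; by move=> w' _; have [] := IHa w'.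
- split; [apply: Sup_range | apply: Inf_range]; by move=> w' _; have [] := IHa w'.
Qed.

Lemma minB (x y : RR) : gmin (1-x) (1-y) = 1 - gmax x y.
Proof. rewrite /gmin /gmax minEle maxEle; do 2 case: ifP => ?; lra. Qed.
Lemma maxB (x y : RR) : gmax (1-x) (1-y) = 1 - gmin x y.
Proof. rewrite /gmin /gmax minEle maxEle; do 2 case: ifP => ?; lra. Qed.
Lemma impB (x y : RR) : gimp (1-x) (1-y) = 1 - gcoimp y x.
Proof. rewrite /gimp /gcoimp; do 2 case: ifP => ?; lra. Qed.
Lemma coimpB (x y : RR) : gcoimp (1-x) (1-y) = 1 - gimp y x.
Proof. rewrite /gimp /gcoimp; do 2 case: ifP => ?; lra. Qed.

Section Dual.
Variables (F : frame) (M : model F).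

Lemma dual_r1 p w : 0 <= 1 - v2v M p w <= 1.
Proof. have /andP[h1 h2] := v2v_range M p w; apply/andP; split; lra. Qed.
Lemma dual_r2 p w : 0 <= 1 - v1v M p w <= 1.
Proof. have /andP[h1 h2] := v1v_range M p w; apply/andP; split; lra. Qed.

Definition Md : model F := Model dual_r1 dual_r2.

Lemma ev_dual phi w :
  ev Md phi w = (1 - (ev M phi w).2, 1 - (ev M phi w).1).
Proof.
elim: phi w => [p|a IHa|a IHa b IHb|a IHa b IHb|a IHa b IHb|a IHa b IHb|a IHa|a IHa] w /=.
- by [].
- by rewrite IHa.
- by rewrite IHa IHb /= minB maxB.
- by rewrite IHa IHb /= minB maxB.
- by rewrite IHa IHb /= impB coimpB.
- by rewrite IHa IHb /= impB coimpB.
- rewrite (eq_imagel (fun w' _ => congr1 fst (IHa w'))) (eq_imagel (fun w' _ => congr1 snd (IHa w'))) /=.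
  by rewrite InfN ?SupN // => w' _; have [] := @ev_range F M a w'.
- rewrite (eq_imagel (fun w' _ => congr1 fst (IHa w'))) (eq_imagel (fun w' _ => congr1 snd (IHa w'))) /=.
  by rewrite InfN ?SupN // => w' _; have [] := @ev_range F M a w'.
Qed.
End Dual.

Theorem proposition1 (F : frame) (phi : fml) :
  KG2_valid F phi <-> (forall (M : model F) (w : fW F), v1 M phi w = 1).
Proof.
split; first by move=> h M w; have [] := h M w.
move=> h M w; split; first exact: h.
have := h (@Md F M) w; rewrite /v1 /v2 ev_dual /=; lra.
Qed.
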